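(* For every $q\in\mathbb{K}$, $(\mathcal{M}MR(q),\succ_q,\cdot_q,\prec_q)$ is a $q$-tridendriform algebra.
   Context: An $\mathcal M$-permutation (big multi-permutation) of $n$ is an ordered sequence $B=(B_1,\dots,B_m)$ of nonempty pairwise disjoint subsets of $[n]$ with union $[n]$ such that for every $1\le i\le n-1$, $i$ and $i+1$ do not lie in the same block. $S^{\mathcal M}_n$ is their set and $\mathcal MMR=\bigoplus_{n\ge1}\mathbb{K}[S^{\mathcal M}_n]$. Restriction: for an ordered set partition $W=(W_1,\dots,W_l)$ and a set $J$, $W|_J$ is $(W_1\cap J,\dots,W_l\cap J)$ with empty blocks deleted. $\mathcal M$-standardization: for an ordered sequence $C=(C_1,\dots,C_p)$ of nonempty pairwise disjoint finite subsets of $\mathbb{Z}_{>0}$, let $s_1<\dots<s_k$ be the elements of $\bigcup C_c$, let $w$ be the word with $w(t)=c$ iff $s_t\in C_c$, let $w'$ (of length $l$) be obtained from $w$ by deleting every letter equal to the letter immediately preceding it; then $\mathrm{std}_{\mathcal M}(C)=(w'^{-1}(1),\dots,w'^{-1}(p))\in S^{\mathcal M}_l$. (E.g. $\mathrm{std}_{\mathcal M}[(1,6,7),(2,3),5,4]=[(1,5),2,4,3]$, $\mathrm{std}_{\mathcal M}[(1,3)]=[1]$.) Products: let $B\in S^{\mathcal M}_n$, $D\in S^{\mathcal M}_m$. Let $\mathcal W(B,D)$ be the set of pairs $(W,S)$ where either (I) $W\in S^{\mathcal M}_{n+m}$, $S=\{n+1,\dots,n+m\}$, or (II) $W\in S^{\mathcal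 M}_{n+m-1}$, $S=\{n,\dots,n+m-1\}$, and in both cases $W|_{[n]}=B$ and $\mathrm{std}_{\mathcal M}(W|_S)=D$. For $W=(W_1,\dots,W_l)$ let $\cap^W_{B,D}$ be the number of blocks $W_j$ with $W_j\cap[n]\neq\emptyset$ and $W_j\cap S\neq\emptyset$. Then $B\succ_qD=\sum q^{\cap^W_{B,D}}W$ over $(W,S)\in\mathcal W(B,D)$ with $W_l\cap[n]=\emptyset$; $B\cdot_qD=\sum q^{\cap^W_{B,D}-1}W$ over those with $W_l\cap[n]\ne\emptyset$ and $W_l\cap S\ne\emptyset$; $B\prec_qD=\sum q^{\cap^W_{B,D}}W$ over those with $W_l\cap S=\emptyset$. $\mathcal MMR(q)$ denotes $\mathcal MMR$ with these products. $q$-tridendriform algebra: bilinear $\prec,\cdot,\succ$ with (1) $(a\prec b)\prec c=a\prec(b\prec c+b\succ c+q\,b\cdot c)$; (2) $(a\succ b)\prec c=a\succ(b\prec c)$; (3) $(a\prec b+a\succ b+q\,a\cdot b)\succ c=a\succ(b\succ c)$; (4) $(a\cdot b)\cdot c=a\cdot(b\cdot c)$; (5) $(a\succ b)\cdot c=a\succ(b\cdot c)$; (6) $(a\prec b)\cdot c=a\cdot(b\succ c)$; (7) $(a\cdot b)\prec c=a\cdot(b\prec c)$. *)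

(* Defs.v *)
From HB Require Import structures.
From mathcomp Require Import all_boot all_order all_algebra.
Set Implicit Arguments. Unset Strict Implicit. Unset Printing Implicit Defensive.
Import GRing.Theory.
Local Open Scope ring_scope.

(* A block is a finite subset of Z_{>0}, represented by its strictly
   increasing list of elements; an ordered sequence of blocks is a
   seq of blocks. *)
Definition blk := seq nat.
Definition mperm := seq blk.

Definition is_mperm (n : nat) (B : mperm) : bool :=
  [&& all (fun b => b != [::]) B,
      all (sorted ltn) B,
      uniq (flatten B),
      sort leq (flatten B) == iota 1 n &
      all (fun b => all (fun i => i.+1 \notin b) b) B ].

Definition msize (B : mperm) : nat := size (flatten B).

(* basis elements of MMR = (+)_{n>=1} K[S^M_n] *)
Definition is_basis (B : mperm) : bool := (0 < msize B)%N && is_mperm (msize B) B.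

Fixpoint subseqs (s : seq nat) : seq (seq nat) :=
  match s with
  | [::] => [:: [::]]
  | x :: s' => let r := subseqs s' in [seq x :: t | t <- r] ++ r
  end.
Fixpoint lists (k : nat) (xs : seq blk) : seq mperm :=
  match k with
  | 0 => [:: [::]]
  | k'.+1 => [seq x :: t | x <- xs, t <- lists k' xs]
  end.
Definition mperms (N : nat) : seq mperm :=
  undup [seq B <- flatten [seq lists k (subseqs (iota 1 N)) | k <- iota 0 N.+1]
        | is_mperm N B].

Definition restrict (W : mperm) (J : pred nat) : mperm :=
  [seq b <- [seq [seq x <- b | J x] | b <- W] | b != [::]].

Fixpoint dedup_adj (w : seq nat) : seq nat :=
  match w with
  | x :: ((y :: _) as w') => if x == y then dedup_adj w' else x :: dedup_adj w'
  | _ => w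
  end.

(* M-standardization (letters of w are 0-based block indices) *)
Definition stdM (C : mperm) : mperm :=
  let s := sort leq (flatten C) in
  let w := [seq find (fun b => x \in b) C | x <- s] in
  let w' := dedup_adj w in
  [seq [seq i.+1 | i <- iota 0 (size w') & nth 0%N w' i == c] | c <- iota 0 (size C)].

(* Elements of MMR: finite formal K-linear combinations of M-permutations. *)
Definition alg (K : fieldType) := seq (K * mperm).
Definition coef (K : fieldType) (x : alg K) (W : mperm) : K :=
  \sum_(p <- x | p.2 == W) p.1.
Definition aeq (K : fieldType) (x y : alg K) : Prop := forall W, coef x W = coef y W.
Definition valid (K : fieldType) (x : alg K) : bool := all (fun p => is_basis p.2) x.
Definition aadd (K : fieldType) (x y : alg K) : alg K := x ++ y.
Definition ascale (K : fieldType) (k : K) (x : alg K) : alg K :=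
  [seq (k * p.1, p.2) | p <- x].
Definition bilin (K : fieldType) (f : mperm -> mperm -> alg K) (x y : alg K) : alg K :=
  flatten [seq [seq (p.1 * r.1 * t.1, t.2) | t <- f p.2 r.2] | p <- x, r <- y].

Definition Wset (B D : mperm) : seq (mperm * pred nat) :=
  let n := msize B in let m := msize D in
  let SI := (fun x => (n < x <= n + m)%N) : pred nat in
  let SII := (fun x => (n <= x <= n + m - 1)%N) : pred nat in
  [seq (W, SI) | W <- mperms (n + m) &
       (restrict W (fun x => (x <= n)%N) == B) && (stdM (restrict W SI) == D)] ++
  [seq (W, SII) | W <- mperms (n + m - 1) &
       (restrict W (fun x => (x <= n)%N) == B) && (stdM (restrict W SII) == D)].

Definition capn (n : nat) (W : mperm) (S : pred nat) : nat :=
  count (fun b => has (fun x => (x <= n)%N) b && has S b) W.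

Definition lastblk (W : mperm) : blk := last [::] W.

Definition succ_b (K : fieldType) (q : K) (B D : mperm) : alg K :=
  [seq (q ^+ capn (msize B) WS.1 WS.2, WS.1) | WS <- Wset B D &
     ~~ has (fun x => (x <= msize B)%N) (lastblk WS.1)].
Definition dot_b (K : fieldType) (q : K) (B D : mperm) : alg K :=
  [seq (q ^+ (capn (msize B) WS.1 WS.2 - 1), WS.1) | WS <- Wset B D &
     has (fun x => (x <= msize B)%N) (lastblk WS.1) && has WS.2 (lastblk WS.1)].
Definition prec_b (K : fieldType) (q : K) (B D : mperm) : alg K :=
  [seq (q ^+ capn (msize B) WS.1 WS.2, WS.1) | WS <- Wset B D &
     ~~ has WS.2 (lastblk WS.1)].

Definition succ_q (K : fieldType) (q : K) := bilin (succ_b q).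
Definition dot_q (K : fieldType) (q : K) := bilin (dot_b q).
Definition prec_q (K : fieldType) (q : K) := bilin (prec_b q).

Definition q_tridendriform (K : fieldType) (A : Type) (validA : A -> Prop)
  (eqA : A -> A -> Prop) (add : A -> A -> A) (scale : K -> A -> A) (q : K)
  (prec dot succ : A -> A -> A) : Prop :=
  forall a b c, validA a -> validA b -> validA c ->
  (eqA (prec (prec a b) c) (prec a (add (add (prec b c) (succ b c)) (scale q (dot b c)))))
   /\ (eqA (prec (succ a b) c) (succ a (prec b c)))
   /\ (eqA (succ (add (add (prec a b) (succ a b)) (scale q (dot a b))) c) (succ a (succ b c)))
   /\ (eqA (dot (dot a b) c) (dot a (dot b c)))
   /\ (eqA (dot (succ a b) c) (succ a (dot b c)))
   /\ (eqA (dot (prec a b) c) (dot a (succ b c)))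
   /\ (eqA (prec (dot a b) c) (dot a (prec b c))).

(* Main.v *)
Require Import Defs.
From mathcomp Require Import all_boot all_order all_algebra.
From Stdlib Require Import Lia.
Set Implicit Arguments. Unset Strict Implicit. Unset Printing Implicit Defensive.

Ltac tolia := repeat match goal with x := _ : nat |- _ => subst x end;
 repeat match goal with
 | H : ?b = true |- _ => change (is_true b) in H
 | H : ?b = false |- _ => apply negbT in H
 | H : is_true (_ <= _) |- _ => apply (elimT leP) in H
 | H : is_true (_ < _) |- _ => apply (elimT ltP) in H
 | H : is_true (_ == _) |- _ => apply (elimT eqP) in H
 | H : is_true (~~ (_ <= _)) |- _ => rewrite -ltnNge in H
 | H : is_true (~~ (_ < _)) |- _ => rewrite -leqNgt in H
 | H : is_true (~~ (_ == _)) |- _ => apply (elimN eqP) in H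
 | H : is_true (~~ (_ && _)) |- _ => rewrite negb_and in H
 | H : is_true (~~ (_ || _)) |- _ => rewrite negb_or in H
 | H : is_true (~~ ~~ _) |- _ => rewrite negbK in H
 | H : is_true (_ && _) |- _ => let a := fresh "a" in let b := fresh "b" in destruct (andP H) as [a b]; clear H
 | H : is_true (_ || _) |- _ => let H1 := fresh "o" in destruct (orP H) as [H1|H1]; clear H
 | |- is_true (~~ _) => apply/negP; let H := fresh "H" in intro H
 | |- is_true _ => apply/negPn/negP; let H := fresh "H" in intro H
 | |- ?b = true => change (is_true b)
 end;
 repeat match goal with H : _ |- _ => match type of H with
   | (_ <= _)%coq_nat => revert H | (_ < _)%coq_nat => revert H | @eq nat _ _ => revert H | ~ _ => revert H
   end end;
 rewrite -?plusE -?minusE -?multE; intros; lia.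

Definition shiftD (k : nat) (W : mperm) : mperm := map (map (fun x => x - k)) W.
Definition Iv (s e : nat) : pred nat := fun x => (s <= x <= e).

Lemma restrict_ext W (P Q : pred nat) : P =1 Q -> restrict W P = restrict W Q.
Proof. by move=> PQ; rewrite /restrict; congr filter; apply: eq_map => b; apply: eq_filter. Qed.

Lemma restrict_cons b W P : restrict (b :: W) P =
  if filter P b == [::] then restrict W P else filter P b :: restrict W P.
Proof. by rewrite /restrict /=; case: (filter P b == [::]). Qed.

Lemma restrictK W P Q : restrict (restrict W P) Q = restrict W (predI Q P).
Proof.
elim: W => [|b W IH] //; rewrite [restrict (b :: W) P]restrict_cons.
rewrite [RHS]restrict_cons filter_predI.
case: eqP => [E|/eqP E]; first by rewrite E /= IH.
by rewrite restrict_cons IH.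
Qed.

Lemma flatten_restrict W P : flatten (restrict W P) = filter P (flatten W).
Proof.
elim: W => [|b W IH] //; rewrite restrict_cons /= filter_cat.
by case: eqP => [->|_] //=; rewrite IH.
Qed.

Lemma flatten_shiftD k W : flatten (shiftD k W) = map (fun x => x - k) (flatten W).
Proof. by rewrite /shiftD map_flatten. Qed.

Lemma shiftDK a b W : shiftD a (shiftD b W) = shiftD (a + b) W.
Proof.
rewrite /shiftD -map_comp; apply: eq_map => c /=; rewrite -map_comp.
by apply: eq_map => x /=; rewrite -subnDA addnC.
Qed.

Lemma shiftD0 W : shiftD 0 W = W.
Proof. by rewrite /shiftD -[RHS]map_id; apply: eq_map => b; rewrite -[RHS]map_id; apply: eq_map => x; rewrite subn0. Qed.

Lemma restrict_shiftD k W P :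
  restrict (shiftD k W) P = shiftD k (restrict W (fun x => P (x - k))).
Proof.
elim: W => [|b W IH] //.
have -> : shiftD k (b :: W) = map (fun x => x - k) b :: shiftD k W by [].
rewrite [LHS]restrict_cons IH (restrict_cons b) filter_map.
by case: (filter _ b).
Qed.

Lemma mem_restrict_blk W P c : c \in restrict W P -> exists2 b, b \in W & c = filter P b.
Proof.
rewrite /restrict mem_filter => /andP [_ /mapP [b bW ->]]; by exists b.
Qed.

Lemma mem_shiftD_blk k W c : c \in shiftD k W -> exists2 b, b \in W & c = map (fun x => x - k) b.
Proof. by move=> /mapP [b bW ->]; exists b. Qed.

Lemma subn_inj k x y : k <= x -> k <= y -> x - k = y - k -> x = y.
Proof. by move=> kx ky E; rewrite -(subnK kx) -(subnK ky) E. Qed.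

Definition good (B : mperm) : bool :=
  [&& all (fun b => b != [::]) B, all (sorted ltn) B, uniq (flatten B) &
      all (fun b => all (fun i => i.+1 \notin b) b) B ].

Definition MP (N : nat) (B : mperm) : Prop :=
  good B /\ forall x, (x \in flatten B) = (0 < x <= N).

Lemma MPP N B : reflect (MP N B) (is_mperm N B).
Proof.
rewrite /is_mperm /MP /good; apply: (iffP idP).
  case/and5P => H1 H2 H3 /eqP H4 H5; split; first by rewrite H1 H2 H3 H5.
  move=> x; rewrite -(perm_mem (permEl (perm_sort leq (flatten B)))) H4.
  by rewrite mem_iota add1n ltnS.
case => /and4P [H1 H2 H3 H5] H4; rewrite H1 H2 H3 H5 /= andbT.
have P : perm_eq (flatten B) (iota 1 N).
  by apply: uniq_perm => // [|x]; rewrite ?iota_uniq // H4 mem_iota add1n ltnS.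
apply/eqP; rewrite -(sorted_sort leq_trans (iota_sorted 1 N)).
by apply/perm_sortP => //; [exact: leq_total | exact: leq_trans | exact: anti_leq].
Qed.

Lemma good_restrict W P : good W -> good (restrict W P).
Proof.
case/and4P => H1 H2 H3 H5; apply/and4P; split.
- by rewrite /restrict all_filter; apply/allP => c _; apply/implyP.
- apply/allP => c /mem_restrict_blk [b bW ->].
  by apply: sorted_filter; [exact: ltn_trans | exact: (allP H2)].
- by rewrite flatten_restrict filter_uniq.
- apply/allP => c /mem_restrict_blk [b bW ->]; apply/allP => i.
  rewrite !mem_filter => /andP [_ ib]; apply/negP => /andP [_ i1b].
  by move/allP: H5 => /(_ b bW) /allP /(_ i ib); rewrite i1b.
Qed.

Lemma good_shiftD k W : good W -> all (fun x => k < x) (flatten W) -> good (shiftD k W).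
Proof.
case/and4P => H1 H2 H3 H5 Hk.
have Hb : forall b, b \in W -> forall x, x \in b -> k < x.
  by move=> b bW x xb; apply: (allP Hk); apply/flattenP; exists b.
apply/and4P; split.
- apply/allP => c /mem_shiftD_blk [b bW ->]; rewrite -size_eq0 size_map size_eq0.
  exact: (allP H1).
- apply/allP => c /mem_shiftD_blk [b bW ->].
  rewrite sorted_map; apply: (sub_in_sorted (P := fun x => k < x)); last exact: (allP H2).
    move=> x y /= kx ky xy; rewrite /relpre; by rewrite ltn_sub2r.
  by apply/allP; apply: Hb.
- rewrite flatten_shiftD map_inj_in_uniq // => x y xW yW /= E.
  have kx : k < x by apply: (allP Hk).
  have ky : k < y by apply: (allP Hk).
  by apply: (subn_inj (ltnW kx) (ltnW ky)).
- apply/allP => c /mem_shiftD_blk [b bW ->]; apply/allP => i /mapP [x xb ->].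
  apply/negP => /mapP [y yb E].
  have kx := Hb b bW x xb; have ky := Hb b bW y yb.
  have Ey : y = x.+1.
    move: E; rewrite -subSn ?(ltnW kx) // => E.
    by apply: (subn_inj (ltnW ky) _ (esym E)); apply: leqW; apply: ltnW.
  move/allP: H5 => /(_ b bW) /allP /(_ x xb); by rewrite -Ey yb.
Qed.

Ltac boolia := apply/idP/idP => ?; tolia.

Lemma MP_size N B : MP N B -> size (flatten B) = N.
Proof.
case=> /and4P [_ _ U _] M.
have P : perm_eq (flatten B) (iota 1 N).
  by apply: uniq_perm => // [|x]; rewrite ?iota_uniq // M mem_iota add1n ltnS.
by rewrite (perm_size P) size_iota.
Qed.

Lemma MP_msize N B : MP N B -> msize B = N.
Proof. exact: MP_size. Qed.

Lemma size_le_flatten (B : mperm) : all (fun b => b != [::]) B -> size B <= size (flatten B).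
Proof.
elim: B => [|b B IH] //= /andP [nb /IH]; rewrite size_cat.
by case: b nb => //= x b _ H; rewrite addSn ltnS (leq_trans H) // leq_addl.
Qed.

Lemma mem_subseqs s b : (b \in subseqs s) = subseq b s.
Proof.
elim: s b => [|x s IH] b /=; first by case: b.
rewrite mem_cat IH; case: b => [|y b] /=.
  by apply/orP; right; apply: sub0seq.
case: eqP => [<-|ne].
  apply/idP/idP; last by move=> H; apply/orP; left; apply/mapP; exists b => //; rewrite IH.
  case/orP => [/mapP [t] | H].
    by rewrite IH => st [->].
  by apply: subseq_trans H; apply: subseq_cons.
apply/idP/idP; last by move=> ->; rewrite orbT.
by case/orP => // /mapP [t _] [E]; case: ne.
Qed.

Lemma mem_lists k xs t : (t \in lists k xs) = (size t == k) && all (mem xs) t.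
Proof.
elim: k t => [|k IH] t /=; first by case: t.
apply/idP/idP.
  by case/allpairsPdep => [x [u [xs1 ut ->]]]; rewrite IH in ut; case/andP: ut => /eqP <- al; rewrite /= xs1 al eqxx.
case: t => [|x t] //= /andP [sz /andP [xx al]].
by apply/allpairsPdep; exists x, t; rewrite IH al andbT; split.
Qed.

Lemma MP_blk_subseq N B b : MP N B -> b \in B -> subseq b (iota 1 N).
Proof.
case=> /and4P [_ S _ _] M bB.
have -> : b = filter (mem b) (iota 1 N).
  apply: (irr_sorted_eq ltn_trans ltnn (allP S b bB)).
    by apply: sorted_filter; [exact: ltn_trans | exact: iota_ltn_sorted].
  move=> x; rewrite mem_filter mem_iota add1n ltnS /=.
  case xb: (x \in b) => //=; rewrite -M; apply/esym/flattenP; by exists b.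
exact: filter_subseq.
Qed.

Lemma mem_mperms N B : (B \in mperms N) = is_mperm N B.
Proof.
rewrite /mperms mem_undup mem_filter.
case H: (is_mperm N B); last by []; rewrite andTb; move/MPP: H => H.
apply/flattenP; exists (lists (size B) (subseqs (iota 1 N))).
  apply/mapP; exists (size B) => //; rewrite mem_iota add0n ltnS -(MP_size H).
  by apply: size_le_flatten; case: H => /and4P [].
rewrite mem_lists eqxx /=; apply/allP => b bB /=; rewrite mem_subseqs.
exact: MP_blk_subseq H bB.
Qed.

Lemma uniq_mperms N : uniq (mperms N).
Proof. exact: undup_uniq. Qed.

Definition R (s e : nat) (W : mperm) : mperm := shiftD s.-1 (restrict W (Iv s e)).

Lemma MP_R N W s e : MP N W -> 0 < s -> s <= e.+1 -> e <= N -> MP (e.+1 - s) (R s e W).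
Proof.
case=> G M s0 se eN; split.
  apply: good_shiftD; first exact: good_restrict.
  rewrite flatten_restrict; apply/allP => x; rewrite mem_filter /Iv => /andP [/andP [sx _] _].
  by tolia.
move=> x; rewrite /R flatten_shiftD flatten_restrict; apply/mapP/idP.
  case=> y; rewrite mem_filter /Iv => /andP [/andP [sy ye] _] ->; by tolia.
move=> H; exists (x + s.-1); last by tolia.
rewrite mem_filter M /Iv; apply/andP; split; tolia.
Qed.

Lemma dedup_id (w : seq nat) : sorted (fun a b => a != b) w -> dedup_adj w = w.
Proof.
elim: w => [|x w IH] //; case: w IH => [|y w] IH //= /andP [xy H].
by rewrite (negbTE xy); congr cons; apply: IH.
Qed.

Lemma sorted_iota_rel (f : nat -> nat) s L :
  (forall i, s <= i -> i.+1 < s + L -> f i != f i.+1) ->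
  sorted (fun a b => a != b) (map f (iota s L)).
Proof.
elim: L s => [|L IH] s H //=.
case: L IH H => [|L] IH H //=.
apply/andP; split; first by apply: H; rewrite ?leqnn // addnS !ltnS addnS leq_addr.
have := IH s.+1; rewrite /=; apply=> i si hi; apply: H; first exact: ltnW.
by tolia.
Qed.

Lemma nth_blk_flatten (C : mperm) c x : x \in nth [::] C c -> x \in flatten C.
Proof.
case: (ltnP c (size C)) => [cs|cs]; last by rewrite nth_default.
by move=> xb; apply/flattenP; exists (nth [::] C c) => //; apply: mem_nth.
Qed.

Lemma find_blk (C : mperm) x c : uniq (flatten C) -> x \in flatten C -> c < size C ->
  (find (fun b => x \in b) C == c) = (x \in nth [::] C c).
Proof.
elim: C c => [|b C IH] c //= U xC cs.
rewrite cat_uniq in U; case/and3P: U => _ dis U.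
case xb: (x \in b).
  case: c cs => [|c] cs //=; apply/esym/negP => /nth_blk_flatten xC'.
  by move/hasP: dis; apply; exists x.
rewrite mem_cat xb /= in xC.
by case: c cs => [|c] cs //=; rewrite eqSS IH.
Qed.

Lemma stdM_R N W s e : MP N W -> 0 < s -> s <= e.+1 -> e <= N ->
  stdM (restrict W (Iv s e)) = R s e W.
Proof.
move=> H s0 se eN.
have GW : good W by case: H.
set C := restrict W (Iv s e).
have GC : good C by apply: good_restrict.
case/and4P: (GC) => GC1 GC2 GC3 GC4.
set L := e.+1 - s.
have memC : forall x, (x \in flatten C) = (s <= x <= e).
  move=> x; rewrite flatten_restrict mem_filter /Iv; case: H => _ ->.
  case E: (s <= x <= e) => //=; move/andP: E => [E1 E2]; by tolia.
have Hsort : sort leq (flatten C) = iota s L.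
  rewrite -(sorted_sort leq_trans (iota_sorted s L)).
  apply/perm_sortP; [exact: leq_total | exact: leq_trans | exact: anti_leq |].
  apply: uniq_perm => //; first exact: iota_uniq.
  by move=> x; rewrite memC mem_iota; apply/idP/idP => ?; tolia.
rewrite /stdM Hsort.
set f := fun x => find (fun b => x \in b) C.
have Hf : forall x, s <= x <= e -> f x < size C.
  by move=> x xse; rewrite /f -has_find; apply/hasP; move: xse; rewrite -memC => /flattenP.
have Hdd : dedup_adj [seq f x | x <- iota s L] = [seq f x | x <- iota s L].
  apply: dedup_id; apply: sorted_iota_rel => i si hi; apply/eqP => E.
  have i1 : s <= i <= e by tolia.
  have i2 : s <= i.+1 <= e by tolia.
  have := nth_find [::] (_ : has (fun b => i \in b) C); rewrite -/(f i).
  have hi1 : has (fun b => i \in b) C by rewrite has_find; exact: Hf.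
  move=> /(_ hi1) ib.
  have := nth_find [::] (_ : has (fun b => i.+1 \in b) C); rewrite -/(f i.+1).
  have hi2 : has (fun b => i.+1 \in b) C by rewrite has_find; exact: Hf.
  move=> /(_ hi2); rewrite -E => i1b.
  move/allP: GC4 => /(_ (nth [::] C (f i)) (mem_nth _ (Hf _ i1))) /allP /(_ i ib).
  by rewrite i1b.
rewrite Hdd size_map size_iota.
rewrite /R /shiftD -/C -[in RHS](mkseq_nth [::] C) /mkseq -map_comp.
apply/eq_in_map => c; rewrite mem_iota add0n => /= cs.
apply: (irr_sorted_eq ltn_trans ltnn).
- rewrite sorted_map; apply: (sub_sorted _ (sorted_filter ltn_trans _ (iota_ltn_sorted 0 L))).
  by move=> x y; rewrite /relpre /=.
- rewrite sorted_map; apply: (sub_in_sorted (P := fun x => s <= x) (e := ltn)).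
  + move=> x y /= sx sy xy; rewrite /relpre; move: sx sy; rewrite /in_mem /= => sx sy; by tolia.
  + apply/allP => x xb; have := nth_blk_flatten xb; rewrite memC => /andP [h1 _]; exact: h1.
  + by apply: (allP GC2); apply: mem_nth.
move=> y; apply/mapP/mapP.
  case=> i; rewrite mem_filter mem_iota add0n => /andP [/eqP fc iL] ->.
  exists (i + s); last by tolia.
  rewrite (nth_map 0) ?size_iota // nth_iota // in fc.
  have xC : i + s \in flatten C by rewrite memC; tolia.
  rewrite -(find_blk GC3 xC cs); apply/eqP.
  have -> : i + s = s + i by rewrite addnC.
  exact: fc.
case=> x xb ->.
have xse : s <= x <= e by rewrite -memC; exact: nth_blk_flatten xb.
exists (x - s); last by tolia.
rewrite mem_filter mem_iota add0n; apply/andP; split; last by tolia.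
rewrite (nth_map 0) ?size_iota ?nth_iota; try by tolia.
rewrite subnKC; last by tolia.
have xC : x \in flatten C by rewrite memC.
by rewrite /f (find_blk GC3 xC cs).
Qed.

Lemma restrict_ext_in W (P Q : pred nat) : {in flatten W, P =1 Q} -> restrict W P = restrict W Q.
Proof.
move=> PQ; rewrite /restrict; congr filter; apply/eq_in_map => b bW; apply/eq_in_filter => x xb.
by apply: PQ; apply/flattenP; exists b.
Qed.

Lemma restrict_le_R N W t : MP N W -> restrict W (fun x => x <= t) = R 1 t W.
Proof.
case=> _ M; rewrite /R shiftD0; apply: restrict_ext_in => x; rewrite M /Iv => /andP [x0 _].
by rewrite x0.
Qed.

Lemma restrict_R_le s1 N m W : 0 < s1 -> s1.-1 + m <= N ->
  restrict (R s1 N W) (fun y => y <= m) = R s1 (s1.-1 + m) W.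
Proof.
move=> s0 h; rewrite /R restrict_shiftD restrictK; congr shiftD; apply: restrict_ext => x.
rewrite /Iv /=; boolia.
Qed.

Lemma R_R a b c d W : 0 < a -> 0 < c -> c.-1 + b <= d ->
  R a b (R c d W) = R (c.-1 + a) (c.-1 + b) W.
Proof.
move=> a0 c0 h; rewrite /R restrict_shiftD restrictK shiftDK; congr shiftD; first by tolia.
apply: restrict_ext => x; rewrite /Iv /=.
boolia.
Qed.

Lemma has_filterI (P Q : pred nat) b : has Q (filter P b) = has (fun x => P x && Q x) b.
Proof. by elim: b => [|x b IH] //=; case: (P x) => //=; rewrite IH. Qed.

Lemma lastblk_restrict W P : has P (lastblk W) -> lastblk (restrict W P) = filter P (lastblk W).
Proof.
case/lastP: W => [|W b] //; rewrite /lastblk last_rcons => hb.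
rewrite /restrict map_rcons filter_rcons -has_filter hb last_rcons //.
Qed.

Lemma lastblk_shiftD k W : lastblk (shiftD k W) = map (fun x => x - k) (lastblk W).
Proof. by rewrite /lastblk /shiftD (last_map (map (fun x => x - k)) W [::]). Qed.

Lemma lastblk_mem W (P : pred nat) : has P (lastblk W) -> lastblk W \in W.
Proof.
case: W => [|b W] //; rewrite /lastblk => _.
by have := mem_last b W.
Qed.

Lemma MP_lastblk N W : MP N W -> 0 < N -> exists2 x, x \in lastblk W & 0 < x <= N.
Proof.
case=> /and4P [G1 _ _ _] M N0.
have : 1 \in flatten W by rewrite M N0.
case: W G1 M => [|b W] // G1 M _.
have : lastblk (b :: W) \in b :: W by have := mem_last b W.
move/(allP G1); case E: (lastblk (b :: W)) => [|x l] // _.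
exists x; first by rewrite inE eqxx.
rewrite -M; apply/flattenP; exists (lastblk (b :: W)); last by rewrite E inE eqxx.
by have := mem_last b W.
Qed.

Lemma capn_pos n W S : has (fun x => x <= n) (lastblk W) -> has S (lastblk W) -> 0 < capn n W S.
Proof.
move=> h1 h2; rewrite /capn -has_count; apply/hasP; exists (lastblk W).
  exact: lastblk_mem h1.
by rewrite h1 h2.
Qed.

Lemma count_restrict (f : blk -> bool) W P : f [::] = false ->
  count f (restrict W P) = count (fun b => f (filter P b)) W.
Proof.
move=> f0; elim: W => [|b W IH] //; rewrite restrict_cons.
by case: eqP => [E|_] /=; rewrite IH // E f0.
Qed.

Lemma count_shiftD (f : blk -> bool) k W :
  count f (shiftD k W) = count (fun b => f (map (fun x => x - k) b)) W.
Proof. by rewrite /shiftD count_map. Qed.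

Lemma count_ident (A B C : pred blk) W :
  count (fun b => A b && B b) W + count (fun b => (A b || B b) && C b) W =
  count (fun b => A b && (B b || C b)) W + count (fun b => B b && C b) W.
Proof.
elim: W => [|b W IH] //=.
move: IH; case: (A b); case: (B b); case: (C b) => /= IH; tolia.
Qed.

Lemma has_predU' (P Q : pred nat) b : has (fun x => P x || Q x) b = has P b || has Q b.
Proof. by elim: b => [|x b IH] //=; rewrite IH; case: (P x); case: (Q x); case: (has P b). Qed.

Section Term.
Variables (n m p s1 s2 N t v : nat) (W : mperm) (S1 S2 S1' S2' : pred nat).
Hypotheses (n0 : 0 < n) (m0 : 0 < m) (p0 : 0 < p) (hs1 : n <= s1 <= n.+1) (hs2 : m <= s2 <= m.+1)
  (ht : t = s1.-1 + m) (hv : v = s2.-1 + p) (hN : N = s1.-1 + v)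
  (HS1 : S1 =1 Iv s1 t) (HS2 : S2 =1 Iv (s1.-1 + s2) N) (HS1' : S1' =1 Iv s1 N) (HS2' : S2' =1 Iv s2 v)
  (HW : MP N W).

Let U := restrict W (fun x => x <= t).
Let V := stdM (restrict W S1').

Lemma tU : U = R 1 t W.
Proof. exact: restrict_le_R HW. Qed.

Lemma MPU : MP t U.
Proof. rewrite tU; have := MP_R HW (isT : 0 < 1) (_ : 1 <= t.+1) (_ : t <= N). rewrite subn1 /=; apply; tolia. Qed.

Lemma tV : V = R s1 N W.
Proof. rewrite /V (restrict_ext _ HS1'); apply: stdM_R HW _ _ _; tolia. Qed.

Lemma MPV : MP v V.
Proof. rewrite tV; have := MP_R HW (_ : 0 < s1) (_ : s1 <= N.+1) (leqnn N).
have -> : N.+1 - s1 = v by tolia.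
apply; tolia. Qed.

Lemma term_conds :
  (U \in mperms t) /\ (restrict U (fun x => x <= n) = restrict W (fun x => x <= n)) /\
      (stdM (restrict U S1) = R s1 t W) /\ (stdM (restrict W S2) = R (s1.-1 + s2) N W) /\
      (V \in mperms v) /\ (restrict V (fun x => x <= m) = R s1 t W) /\
      (stdM (restrict V S2') = R (s1.-1 + s2) N W).
Proof.
split; [|split; [|split; [|split; [|split; [|split]]]]].
- by rewrite mem_mperms; apply/MPP; exact: MPU.
- rewrite /U restrictK; apply: restrict_ext => x /=; boolia.
- rewrite /U restrictK (restrict_ext _ (_ : _ =1 Iv s1 t)); first by apply: stdM_R HW _ _ _; tolia.
  by move=> x; rewrite /= HS1 /Iv; boolia.
- by rewrite (restrict_ext _ HS2); apply: stdM_R HW _ _ _; tolia.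
- by rewrite mem_mperms; apply/MPP; exact: MPV.
- by rewrite tV restrict_R_le ?ht //; tolia.
- rewrite (restrict_ext _ HS2') (stdM_R MPV) ?tV ?R_R //; try tolia.
  by rewrite -hN.
Qed.

Lemma term_psi :
  let L := lastblk W in
  let a := has (fun x => x <= n) L in
  let b := has (Iv s1 t) L in
  let c := has (Iv (s1.-1 + s2) N) L in
  [/\ has (fun x => x <= t) L = a || b, has S2 L = c, has S1' L = b || c, a || b || c &
  [/\ (a || b -> has (fun x => x <= n) (lastblk U) = a /\ has S1 (lastblk U) = b),
      has (fun x => x <= n) (lastblk U) || has S1 (lastblk U),
      (b || c -> has (fun x => x <= m) (lastblk V) = b /\ has S2' (lastblk V) = c),
      has (fun x => x <= m) (lastblk V) || has S2' (lastblk V) &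
      capn n U S1 + capn t W S2 = capn n W S1' + capn m V S2' ]].
Proof.
move=> L a b c.
have E1 : has (fun x => x <= t) L = a || b.
  by rewrite /a /b -has_predU'; apply: eq_has => x; rewrite /Iv; boolia.
have E3 : has S1' L = b || c.
  by rewrite /b /c -has_predU'; apply: eq_has => x; rewrite HS1' /Iv; boolia.
split => //.
- by apply: eq_has => x; rewrite HS2.
- have N0 : 0 < N by tolia.
  have [x xL xN] := MP_lastblk HW N0.
  rewrite /a /b /c; apply/orP; case: (leqP x n) => xn.
    by left; apply/orP; left; apply/hasP; exists x.
  case: (leqP x t) => xt.
    by left; apply/orP; right; apply/hasP; exists x => //; rewrite /Iv; tolia.
  by right; apply/hasP; exists x => //; rewrite /Iv; tolia.
split.
- rewrite -E1 => h; rewrite /U lastblk_restrict // !has_filterI; split.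
    by apply: eq_has => x /=; boolia.
  by apply: eq_has => x /=; rewrite HS1 /Iv; boolia.
- have t0 : 0 < t by tolia.
  have [x xL xt] := MP_lastblk MPU t0.
  apply/orP; case: (leqP x n) => xn.
    by left; apply/hasP; exists x.
  by right; apply/hasP; exists x => //; rewrite HS1 /Iv; tolia.
- move=> h0; have h : has (Iv s1 N) L by rewrite -(eq_has HS1') E3.
  rewrite tV /R lastblk_shiftD lastblk_restrict // !has_map !has_filterI; split.
    by apply: eq_has => x /=; rewrite /Iv; boolia.
  by apply: eq_has => x /=; rewrite HS2' /Iv; boolia.
- have v0 : 0 < v by tolia.
  have [x xL xt] := MP_lastblk MPV v0.
  apply/orP; case: (leqP x m) => xn.
    by left; apply/hasP; exists x.
  by right; apply/hasP; exists x => //; rewrite HS2' /Iv; tolia.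
pose A := fun b => has (fun x => x <= n) b.
pose B := fun b => has (Iv s1 t) b.
pose C := fun b => has (Iv (s1.-1 + s2) N) b.
have -> : capn n U S1 = count (fun b => A b && B b) W.
  rewrite /capn /U count_restrict //; apply: eq_count => bl; rewrite !has_filterI; congr andb.
    by apply: eq_has => x /=; boolia.
  by apply: eq_has => x /=; rewrite HS1 /Iv; boolia.
have -> : capn t W S2 = count (fun b => (A b || B b) && C b) W.
  rewrite /capn; apply: eq_count => bl; congr andb.
    by rewrite /A /B -has_predU'; apply: eq_has => x; rewrite /Iv; boolia.
  by apply: eq_has => x; rewrite HS2.
have -> : capn n W S1' = count (fun b => A b && (B b || C b)) W.
  rewrite /capn; apply: eq_count => bl; congr andb.
  by rewrite /B /C -has_predU'; apply: eq_has => x; rewrite HS1' /Iv; boolia.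
have -> : capn m V S2' = count (fun b => B b && C b) W.
  rewrite /capn tV /R count_shiftD count_restrict //; apply: eq_count => bl.
  rewrite !has_map !has_filterI; congr andb.
    by apply: eq_has => x /=; rewrite /Iv; boolia.
  by apply: eq_has => x /=; rewrite HS2' /Iv; boolia.
exact: count_ident.
Qed.

End Term.

Set Implicit Arguments. Unset Strict Implicit. Unset Printing Implicit Defensive.
Import GRing.Theory.
Local Open Scope ring_scope.

Section Alg.
Variable K : fieldType.

Definition Ssum (L : alg K) (G : mperm -> K) : K := \sum_(t <- L) t.1 * G t.2.

Lemma coefSsum (L : alg K) W : coef L W = Ssum L (fun U => (U == W)%:R).
Proof.
rewrite /coef /Ssum big_mkcond; apply: eq_bigr => t _.
by case: eqP => _; rewrite ?mulr1 ?mulr0.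
Qed.

Lemma Ssum_cat (x y : alg K) G : Ssum (x ++ y) G = Ssum x G + Ssum y G.
Proof. by rewrite /Ssum big_cat. Qed.

Lemma Ssum_scale (k : K) (x : alg K) G : Ssum (ascale k x) G = k * Ssum x G.
Proof. by rewrite /Ssum /ascale big_map mulr_sumr; apply: eq_bigr => t _; rewrite mulrA. Qed.

Lemma Ssum_bilin f (x y : alg K) G :
  Ssum (bilin f x y) G = Ssum x (fun A => Ssum y (fun B => Ssum (f A B) G)).
Proof.
rewrite /Ssum /bilin big_flatten big_allpairs_dep /=.
apply: eq_bigr => a _; rewrite mulr_sumr; apply: eq_bigr => b _.
rewrite big_map mulrA mulr_sumr; apply: eq_bigr => t _ /=; by rewrite !mulrA.
Qed.

Lemma Ssum_add (x : alg K) G1 G2 : Ssum x (fun U => G1 U + G2 U) = Ssum x G1 + Ssum x G2.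
Proof. by rewrite /Ssum -big_split; apply: eq_bigr => t _; rewrite mulrDr. Qed.

Lemma Ssum_mull (x : alg K) k G : Ssum x (fun U => k * G U) = k * Ssum x G.
Proof. by rewrite /Ssum mulr_sumr; apply: eq_bigr => t _; rewrite mulrCA. Qed.

Lemma Ssum_exchange (x y : alg K) F :
  Ssum x (fun U => Ssum y (fun V => F U V)) = Ssum y (fun V => Ssum x (fun U => F U V)).
Proof.
rewrite /Ssum; under eq_bigr => t _ do rewrite mulr_sumr.
rewrite exchange_big; apply: eq_bigr => r _; rewrite mulr_sumr; apply: eq_bigr => t _.
by rewrite mulrCA.
Qed.

Lemma Ssum_eq_valid (x : alg K) G1 G2 : valid x -> (forall B, is_basis B -> G1 B = G2 B) ->
  Ssum x G1 = Ssum x G2.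
Proof.
move=> /allP vx H; rewrite /Ssum big_seq [RHS]big_seq; apply: eq_bigr => t tx.
by rewrite H //; apply: vx.
Qed.

Lemma collapse (L : seq mperm) (P : pred mperm) (F : mperm -> K) V : uniq L ->
  \sum_(X <- L | P X) (X == V)%:R * F X = ((V \in L) && P V)%:R * F V.
Proof.
elim: L => [|X L IH] /=; first by rewrite big_nil mul0r.
case/andP => XL U; rewrite big_cons IH // inE.
case: (eqVneq X V) => [<-|ne] /=.
  rewrite (negbTE XL) andFb mul0r addr0 /=; by case: (P X); rewrite ?mul1r ?mul0r.
by rewrite mul0r; case: (P X); rewrite ?add0r.
Qed.


Definition gen (psi : bool -> bool -> nat -> K) (B D : mperm) : alg K :=
  [seq (psi (has (fun x => x <= msize B)%N (lastblk WS.1)) (has WS.2 (lastblk WS.1))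
        (capn (msize B) WS.1 WS.2), WS.1) | WS <- Wset B D].

Definition psis (q : K) (h1 h2 : bool) (k : nat) : K := (~~ h1)%:R * q ^+ k.
Definition psid (q : K) (h1 h2 : bool) (k : nat) : K := (h1 && h2)%:R * q ^+ (k - 1).
Definition psip (q : K) (h1 h2 : bool) (k : nat) : K := (~~ h2)%:R * q ^+ k.
Definition psiall (q : K) h1 h2 k := psip q h1 h2 k + psis q h1 h2 k + q * psid q h1 h2 k.

Lemma Ssum_succ q B D G : Ssum (succ_b q B D) G = Ssum (gen (psis q) B D) G.
Proof.
rewrite /Ssum /succ_b /gen !big_map big_filter big_mkcond.
apply: eq_bigr => WS _ /=; rewrite /psis; by case: (has _ _); rewrite ?mul0r ?mul1r.
Qed.

Lemma Ssum_prec q B D G : Ssum (prec_b q B D) G = Ssum (gen (psip q) B D) G.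
Proof.
rewrite /Ssum /prec_b /gen !big_map big_filter big_mkcond.
apply: eq_bigr => WS _ /=; rewrite /psip; by case: (has _ _); rewrite ?mul0r ?mul1r.
Qed.

Lemma Ssum_dot q B D G : Ssum (dot_b q B D) G = Ssum (gen (psid q) B D) G.
Proof.
rewrite /Ssum /dot_b /gen !big_map big_filter big_mkcond.
apply: eq_bigr => WS _ /=; rewrite /psid; by case: (_ && _); rewrite ?mul0r ?mul1r.
Qed.

Lemma Ssum_gen psi B D G :
  let n := msize B in let m := msize D in
  let SI := (fun x => (n < x <= n + m)%N) : pred nat in
  let SII := (fun x => (n <= x <= n + m - 1)%N) : pred nat in
  Ssum (gen psi B D) G =
  \sum_(W <- mperms (n + m) | (restrict W (fun x => (x <= n)%N) == B) && (stdM (restrict W SI) == D))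
     psi (has (fun x => x <= n)%N (lastblk W)) (has SI (lastblk W)) (capn n W SI) * G W +
  \sum_(W <- mperms (n + m - 1) | (restrict W (fun x => (x <= n)%N) == B) && (stdM (restrict W SII) == D))
     psi (has (fun x => x <= n)%N (lastblk W)) (has SII (lastblk W)) (capn n W SII) * G W.
Proof.
by rewrite /Ssum /gen big_map /Wset big_cat !big_map !big_filter.
Qed.


Lemma collapse' (L : seq mperm) (P : pred mperm) (F : mperm -> K) V : uniq L ->
  \sum_(X <- L | P X) F X * (X == V)%:R = ((V \in L) && P V)%:R * F V.
Proof. by move=> u; rewrite -collapse //; apply: eq_bigr => X _; rewrite mulrC. Qed.

Lemma inner_eval psi U D W :
  let t := msize U in let p := msize D in
  Ssum (gen psi U D) (fun X => (X == W)%:R) =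
  ((W \in mperms (t + p)) && ((restrict W (fun x => (x <= t)%N) == U) &&
     (stdM (restrict W (fun x => (t < x <= t + p)%N)) == D)))%:R *
   psi (has (fun x => x <= t)%N (lastblk W)) (has (fun x => (t < x <= t + p)%N) (lastblk W))
       (capn t W (fun x => (t < x <= t + p)%N)) +
  ((W \in mperms (t + p - 1)) && ((restrict W (fun x => (x <= t)%N) == U) &&
     (stdM (restrict W (fun x => (t <= x <= t + p - 1)%N)) == D)))%:R *
   psi (has (fun x => x <= t)%N (lastblk W)) (has (fun x => (t <= x <= t + p - 1)%N) (lastblk W))
       (capn t W (fun x => (t <= x <= t + p - 1)%N)).
Proof.
move=> t p; rewrite Ssum_gen /= !collapse' ?uniq_mperms //.
Qed.

Lemma bool_split (a z : bool) (U V : mperm) :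
  ((a && ((V == U) && z))%:R : K) = (U == V)%:R * (a && z)%:R.
Proof. by rewrite eq_sym; case: (U == V); case: a; case: z; rewrite /= ?mul1r ?mul0r. Qed.

Lemma outer_eval psi2 D W t (P : pred mperm) (f1 : mperm -> K) :
  let p := msize D in
  let V := restrict W (fun x => (x <= t)%N) in
  \sum_(U <- mperms t | P U) f1 U * Ssum (gen psi2 U D) (fun X => (X == W)%:R) =
  ((V \in mperms t) && P V)%:R * (f1 V * (
  ((W \in mperms (t + p)) && (stdM (restrict W (fun x => (t < x <= t + p)%N)) == D))%:R *
   psi2 (has (fun x => x <= t)%N (lastblk W)) (has (fun x => (t < x <= t + p)%N) (lastblk W))
       (capn t W (fun x => (t < x <= t + p)%N)) +
  ((W \in mperms (t + p - 1)) && (stdM (restrict W (fun x => (t <= x <= t + p - 1)%N)) == D))%:R *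
   psi2 (has (fun x => x <= t)%N (lastblk W)) (has (fun x => (t <= x <= t + p - 1)%N) (lastblk W))
       (capn t W (fun x => (t <= x <= t + p - 1)%N)))).
Proof.
move=> p V.
rewrite big_seq_cond.
rewrite (eq_bigr (fun U => (U == V)%:R * (f1 U * (
  ((W \in mperms (t + p)) && (stdM (restrict W (fun x => (t < x <= t + p)%N)) == D))%:R *
   psi2 (has (fun x => x <= t)%N (lastblk W)) (has (fun x => (t < x <= t + p)%N) (lastblk W))
       (capn t W (fun x => (t < x <= t + p)%N)) +
  ((W \in mperms (t + p - 1)) && (stdM (restrict W (fun x => (t <= x <= t + p - 1)%N)) == D))%:R *
   psi2 (has (fun x => x <= t)%N (lastblk W)) (has (fun x => (t <= x <= t + p - 1)%N) (lastblk W))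
       (capn t W (fun x => (t <= x <= t + p - 1)%N)))))).
  rewrite collapse ?uniq_mperms //.
  by case: (V \in mperms t).
move=> U /andP [Ut _]; rewrite inner_eval.
have -> : msize U = t by apply: MP_msize; apply/MPP; rewrite -mem_mperms.
rewrite !bool_split -/V; case: (U == V); rewrite ?mul1r ?mul0r ?mulr0 ?add0r //.
by rewrite mulr0.
Qed.


Definition LT psi1 psi2 (B C D W : mperm) (n t : nat) (S1 : pred nat) (N : nat) (S2 : pred nat) : K :=
  let U := restrict W (fun x => (x <= t)%N) in
  ((U \in mperms t) && ((restrict U (fun x => (x <= n)%N) == B) && (stdM (restrict U S1) == C)))%:R *
  (psi1 (has (fun x => x <= n)%N (lastblk U)) (has S1 (lastblk U)) (capn n U S1) *
  (((W \in mperms N) && (stdM (restrict W S2) == D))%:R *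
   psi2 (has (fun x => x <= t)%N (lastblk W)) (has S2 (lastblk W)) (capn t W S2))).

Lemma master_L psi1 psi2 B C D W :
  let n := msize B in let m := msize C in let p := msize D in
  Ssum (gen psi1 B C) (fun U => Ssum (gen psi2 U D) (fun X => (X == W)%:R)) =
  (LT psi1 psi2 B C D W n (n + m) (fun x => (n < x <= n + m)%N)
      (n + m + p) (fun x => (n + m < x <= n + m + p)%N) +
   LT psi1 psi2 B C D W n (n + m) (fun x => (n < x <= n + m)%N)
      (n + m + p - 1) (fun x => (n + m <= x <= n + m + p - 1)%N)) +
  (LT psi1 psi2 B C D W n (n + m - 1) (fun x => (n <= x <= n + m - 1)%N)
      (n + m - 1 + p) (fun x => (n + m - 1 < x <= n + m - 1 + p)%N) +
   LT psi1 psi2 B C D W n (n + m - 1) (fun x => (n <= x <= n + m - 1)%N)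
      (n + m - 1 + p - 1) (fun x => (n + m - 1 <= x <= n + m - 1 + p - 1)%N)).
Proof.
move=> n m p; rewrite Ssum_gen /=.
rewrite (outer_eval _ _ _ _ _ (fun U => psi1 (has (fun x => x <= n)%N (lastblk U))
   (has (fun x => (n < x <= n + m)%N) (lastblk U)) (capn n U (fun x => (n < x <= n + m)%N)))).
rewrite (outer_eval _ _ _ _ _ (fun U => psi1 (has (fun x => x <= n)%N (lastblk U))
   (has (fun x => (n <= x <= n + m - 1)%N) (lastblk U)) (capn n U (fun x => (n <= x <= n + m - 1)%N)))).
by rewrite /LT !mulrDr !mulrA.
Qed.


Lemma bool_split2 (a z : bool) (U V : mperm) :
  ((a && (z && (V == U)))%:R : K) = (U == V)%:R * (a && z)%:R.
Proof. by rewrite eq_sym; case: (U == V); case: a; case: z; rewrite /= ?mul1r ?mul0r. Qed.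

Lemma outer_eval_R chi1 B W v (P : pred mperm) (f2 : mperm -> K) :
  let n := msize B in
  let V0 := stdM (restrict W (fun x => (n < x <= n + v)%N)) in
  let V1 := stdM (restrict W (fun x => (n <= x <= n + v - 1)%N)) in
  \sum_(V <- mperms v | P V) f2 V * Ssum (gen chi1 B V) (fun X => (X == W)%:R) =
  ((V0 \in mperms v) && P V0)%:R * (f2 V0 *
   (((W \in mperms (n + v)) && (restrict W (fun x => (x <= n)%N) == B))%:R *
   chi1 (has (fun x => x <= n)%N (lastblk W)) (has (fun x => (n < x <= n + v)%N) (lastblk W))
       (capn n W (fun x => (n < x <= n + v)%N)))) +
  ((V1 \in mperms v) && P V1)%:R * (f2 V1 *
   (((W \in mperms (n + v - 1)) && (restrict W (fun x => (x <= n)%N) == B))%:R *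
   chi1 (has (fun x => x <= n)%N (lastblk W)) (has (fun x => (n <= x <= n + v - 1)%N) (lastblk W))
       (capn n W (fun x => (n <= x <= n + v - 1)%N)))).
Proof.
move=> n V0 V1.
rewrite big_seq_cond.
rewrite (eq_bigr (fun V => (V == V0)%:R * (f2 V *
   (((W \in mperms (n + v)) && (restrict W (fun x => (x <= n)%N) == B))%:R *
   chi1 (has (fun x => x <= n)%N (lastblk W)) (has (fun x => (n < x <= n + v)%N) (lastblk W))
       (capn n W (fun x => (n < x <= n + v)%N)))) +
   (V == V1)%:R * (f2 V *
   (((W \in mperms (n + v - 1)) && (restrict W (fun x => (x <= n)%N) == B))%:R *
   chi1 (has (fun x => x <= n)%N (lastblk W)) (has (fun x => (n <= x <= n + v - 1)%N) (lastblk W))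
       (capn n W (fun x => (n <= x <= n + v - 1)%N)))))).
  rewrite big_split /= !collapse ?uniq_mperms //.
  by case: (V0 \in mperms v); case: (V1 \in mperms v).
move=> V /andP [Vt _]; rewrite inner_eval.
have -> : msize V = v by apply: MP_msize; apply/MPP; rewrite -mem_mperms.
rewrite !bool_split2 -/n -/V0 -/V1 mulrDr.
by congr (_ + _); rewrite -!mulrA mulrCA.
Qed.

Definition RT chi1 chi2 (B C D W : mperm) (n m v : nat) (S2' : pred nat) (N : nat) (S1' : pred nat) : K :=
  let V := stdM (restrict W S1') in
  ((V \in mperms v) && ((restrict V (fun x => (x <= m)%N) == C) && (stdM (restrict V S2') == D)))%:R *
  (chi2 (has (fun x => x <= m)%N (lastblk V)) (has S2' (lastblk V)) (capn m V S2') *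
  (((W \in mperms N) && (restrict W (fun x => (x <= n)%N) == B))%:R *
   chi1 (has (fun x => x <= n)%N (lastblk W)) (has S1' (lastblk W)) (capn n W S1'))).

Lemma master_R chi1 chi2 B C D W :
  let n := msize B in let m := msize C in let p := msize D in
  Ssum (gen chi2 C D) (fun V => Ssum (gen chi1 B V) (fun X => (X == W)%:R)) =
  (RT chi1 chi2 B C D W n m (m + p) (fun x => (m < x <= m + p)%N)
      (n + (m + p)) (fun x => (n < x <= n + (m + p))%N) +
   RT chi1 chi2 B C D W n m (m + p) (fun x => (m < x <= m + p)%N)
      (n + (m + p) - 1) (fun x => (n <= x <= n + (m + p) - 1)%N)) +
  (RT chi1 chi2 B C D W n m (m + p - 1) (fun x => (m <= x <= m + p - 1)%N)
      (n + (m + p - 1)) (fun x => (n < x <= n + (m + p - 1))%N) +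
   RT chi1 chi2 B C D W n m (m + p - 1) (fun x => (m <= x <= m + p - 1)%N)
      (n + (m + p - 1) - 1) (fun x => (n <= x <= n + (m + p - 1) - 1)%N)).
Proof.
move=> n m p; rewrite Ssum_gen /=.
rewrite (outer_eval_R _ _ _ _ _ (fun V => chi2 (has (fun x => x <= m)%N (lastblk V))
   (has (fun x => (m < x <= m + p)%N) (lastblk V)) (capn m V (fun x => (m < x <= m + p)%N)))).
rewrite (outer_eval_R _ _ _ _ _ (fun V => chi2 (has (fun x => x <= m)%N (lastblk V))
   (has (fun x => (m <= x <= m + p - 1)%N) (lastblk V)) (capn m V (fun x => (m <= x <= m + p - 1)%N)))).
by [].
Qed.


Definition compat (psi1 psi2 chi1 chi2 : bool -> bool -> nat -> K) :=
  forall (a b c h1 h2 g1 g2 : bool) (x y z w : nat),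
  a || b || c -> (a || b -> h1 = a /\ h2 = b) -> h1 || h2 ->
  (b || c -> g1 = b /\ g2 = c) -> g1 || g2 ->
  (h1 && h2 -> 0 < x)%N -> ((a || b) && c -> 0 < y)%N -> (a && (b || c) -> 0 < z)%N ->
  (g1 && g2 -> 0 < w)%N -> (x + y = z + w)%N ->
  psi1 h1 h2 x * psi2 (a || b) c y = chi1 a (b || c) z * chi2 g1 g2 w.

Lemma term_eq psi1 psi2 chi1 chi2 B C D W (n m p s1 s2 N t v : nat) (S1 S2 S1' S2' : pred nat) :
  compat psi1 psi2 chi1 chi2 ->
  (0 < n)%N -> (0 < m)%N -> (0 < p)%N -> (n <= s1 <= n.+1)%N -> (m <= s2 <= m.+1)%N ->
  t = (s1.-1 + m)%N -> v = (s2.-1 + p)%N -> N = (s1.-1 + v)%N ->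
  S1 =1 Iv s1 t -> S2 =1 Iv (s1.-1 + s2) N -> S1' =1 Iv s1 N -> S2' =1 Iv s2 v ->
  LT psi1 psi2 B C D W n t S1 N S2 = RT chi1 chi2 B C D W n m v S2' N S1'.
Proof.
move=> Hc n0 m0 p0 hs1 hs2 ht hv hN HS1 HS2 HS1' HS2'.
rewrite /LT /RT.
case HWN: (W \in mperms N); last by rewrite /= !(mul0r, mulr0).
have HW : MP N W by apply/MPP; rewrite -mem_mperms.
have [c1 [c2 [c3 [c4 [c5 [c6 c7]]]]]] := term_conds n0 m0 p0 hs1 hs2 ht hv hN HS1 HS2 HS1' HS2' HW.
have [E1 E2 E3 abc [F1 F2 F3 F4 F5]] := term_psi n0 m0 p0 hs1 hs2 ht hv hN HS1 HS2 HS1' HS2' HW.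
rewrite c1 c2 c3 c4 c5 c6 c7 /=.
case: (restrict W (fun x => (x <= n)%N) == B); last by rewrite /= !(mul0r, mulr0, andbF).
case: (R s1 t W == C); last by rewrite /= !(mul0r, mulr0, andbF).
case: (R (s1.-1 + s2) N W == D); last by rewrite /= !(mul0r, mulr0, andbF).
rewrite /= !mul1r E1 E2 E3 [RHS]mulrC.
apply: Hc => //.
- by move=> /andP [h1 h2]; apply: capn_pos.
- by rewrite -E1 -E2 => /andP [h1 h2]; apply: capn_pos.
- by rewrite -E3 => /andP [h1 h2]; apply: capn_pos.
- by move=> /andP [h1 h2]; apply: capn_pos.
Qed.


Lemma compat1 q : compat (psip q) (psip q) (psip q) (psiall q).
Proof.
move=> a b c h1 h2 g1 g2 x y z w H1 H2 H3 H4 H5 P1 P2 P3 P4 E.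
have {H2}H2 : (a || b) ==> (h1 == a) && (h2 == b) by apply/implyP => /H2 [-> ->]; rewrite !eqxx.
have {H4}H4 : (b || c) ==> (g1 == b) && (g2 == c) by apply/implyP => /H4 [-> ->]; rewrite !eqxx.
move/implyP: P1 => P1; move/implyP: P2 => P2; move/implyP: P3 => P3; move/implyP: P4 => P4.
move: H1 H2 H3 H4 H5 P1 P2 P3 P4.
case: a; case: b; case: c; case: h1; case: h2; case: g1; case: g2 => //= H1 H2 H3 H4 H5 P1 P2 P3 P4;
 rewrite /psiall /psis /psid /psip /= ?(mul0r, mulr0, mul1r, mulr1, add0r, addr0) //;
 rewrite -?exprS -?exprD; congr (_ ^+ _); tolia.
Qed.
Lemma compat2 q : compat (psis q) (psip q) (psis q) (psip q).
Proof.
move=> a b c h1 h2 g1 g2 x y z w H1 H2 H3 H4 H5 P1 P2 P3 P4 E.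
have {H2}H2 : (a || b) ==> (h1 == a) && (h2 == b) by apply/implyP => /H2 [-> ->]; rewrite !eqxx.
have {H4}H4 : (b || c) ==> (g1 == b) && (g2 == c) by apply/implyP => /H4 [-> ->]; rewrite !eqxx.
move/implyP: P1 => P1; move/implyP: P2 => P2; move/implyP: P3 => P3; move/implyP: P4 => P4.
move: H1 H2 H3 H4 H5 P1 P2 P3 P4.
case: a; case: b; case: c; case: h1; case: h2; case: g1; case: g2 => //= H1 H2 H3 H4 H5 P1 P2 P3 P4;
 rewrite /psiall /psis /psid /psip /= ?(mul0r, mulr0, mul1r, mulr1, add0r, addr0) //;
 rewrite -?exprS -?exprD; congr (_ ^+ _); tolia.
Qed.
Lemma compat3 q : compat (psiall q) (psis q) (psis q) (psis q).
Proof.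
move=> a b c h1 h2 g1 g2 x y z w H1 H2 H3 H4 H5 P1 P2 P3 P4 E.
have {H2}H2 : (a || b) ==> (h1 == a) && (h2 == b) by apply/implyP => /H2 [-> ->]; rewrite !eqxx.
have {H4}H4 : (b || c) ==> (g1 == b) && (g2 == c) by apply/implyP => /H4 [-> ->]; rewrite !eqxx.
move/implyP: P1 => P1; move/implyP: P2 => P2; move/implyP: P3 => P3; move/implyP: P4 => P4.
move: H1 H2 H3 H4 H5 P1 P2 P3 P4.
case: a; case: b; case: c; case: h1; case: h2; case: g1; case: g2 => //= H1 H2 H3 H4 H5 P1 P2 P3 P4;
 rewrite /psiall /psis /psid /psip /= ?(mul0r, mulr0, mul1r, mulr1, add0r, addr0) //;
 rewrite -?exprS -?exprD; congr (_ ^+ _); tolia.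
Qed.
Lemma compat4 q : compat (psid q) (psid q) (psid q) (psid q).
Proof.
move=> a b c h1 h2 g1 g2 x y z w H1 H2 H3 H4 H5 P1 P2 P3 P4 E.
have {H2}H2 : (a || b) ==> (h1 == a) && (h2 == b) by apply/implyP => /H2 [-> ->]; rewrite !eqxx.
have {H4}H4 : (b || c) ==> (g1 == b) && (g2 == c) by apply/implyP => /H4 [-> ->]; rewrite !eqxx.
move/implyP: P1 => P1; move/implyP: P2 => P2; move/implyP: P3 => P3; move/implyP: P4 => P4.
move: H1 H2 H3 H4 H5 P1 P2 P3 P4.
case: a; case: b; case: c; case: h1; case: h2; case: g1; case: g2 => //= H1 H2 H3 H4 H5 P1 P2 P3 P4;
 rewrite /psiall /psis /psid /psip /= ?(mul0r, mulr0, mul1r, mulr1, add0r, addr0) //;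
 rewrite -?exprS -?exprD; congr (_ ^+ _); tolia.
Qed.
Lemma compat5 q : compat (psis q) (psid q) (psis q) (psid q).
Proof.
move=> a b c h1 h2 g1 g2 x y z w H1 H2 H3 H4 H5 P1 P2 P3 P4 E.
have {H2}H2 : (a || b) ==> (h1 == a) && (h2 == b) by apply/implyP => /H2 [-> ->]; rewrite !eqxx.
have {H4}H4 : (b || c) ==> (g1 == b) && (g2 == c) by apply/implyP => /H4 [-> ->]; rewrite !eqxx.
move/implyP: P1 => P1; move/implyP: P2 => P2; move/implyP: P3 => P3; move/implyP: P4 => P4.
move: H1 H2 H3 H4 H5 P1 P2 P3 P4.
case: a; case: b; case: c; case: h1; case: h2; case: g1; case: g2 => //= H1 H2 H3 H4 H5 P1 P2 P3 P4;
 rewrite /psiall /psis /psid /psip /= ?(mul0r, mulr0, mul1r, mulr1, add0r, addr0) //;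
 rewrite -?exprS -?exprD; congr (_ ^+ _); tolia.
Qed.
Lemma compat6 q : compat (psip q) (psid q) (psid q) (psis q).
Proof.
move=> a b c h1 h2 g1 g2 x y z w H1 H2 H3 H4 H5 P1 P2 P3 P4 E.
have {H2}H2 : (a || b) ==> (h1 == a) && (h2 == b) by apply/implyP => /H2 [-> ->]; rewrite !eqxx.
have {H4}H4 : (b || c) ==> (g1 == b) && (g2 == c) by apply/implyP => /H4 [-> ->]; rewrite !eqxx.
move/implyP: P1 => P1; move/implyP: P2 => P2; move/implyP: P3 => P3; move/implyP: P4 => P4.
move: H1 H2 H3 H4 H5 P1 P2 P3 P4.
case: a; case: b; case: c; case: h1; case: h2; case: g1; case: g2 => //= H1 H2 H3 H4 H5 P1 P2 P3 P4;
 rewrite /psiall /psis /psid /psip /= ?(mul0r, mulr0, mul1r, mulr1, add0r, addr0) //;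
 rewrite -?exprS -?exprD; congr (_ ^+ _); tolia.
Qed.
Lemma compat7 q : compat (psid q) (psip q) (psid q) (psip q).
Proof.
move=> a b c h1 h2 g1 g2 x y z w H1 H2 H3 H4 H5 P1 P2 P3 P4 E.
have {H2}H2 : (a || b) ==> (h1 == a) && (h2 == b) by apply/implyP => /H2 [-> ->]; rewrite !eqxx.
have {H4}H4 : (b || c) ==> (g1 == b) && (g2 == c) by apply/implyP => /H4 [-> ->]; rewrite !eqxx.
move/implyP: P1 => P1; move/implyP: P2 => P2; move/implyP: P3 => P3; move/implyP: P4 => P4.
move: H1 H2 H3 H4 H5 P1 P2 P3 P4.
case: a; case: b; case: c; case: h1; case: h2; case: g1; case: g2 => //= H1 H2 H3 H4 H5 P1 P2 P3 P4;
 rewrite /psiall /psis /psid /psip /= ?(mul0r, mulr0, mul1r, mulr1, add0r, addr0) //;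
 rewrite -?exprS -?exprD; congr (_ ^+ _); tolia.
Qed.


Lemma term_eq' (s1 s2 : nat) psi1 psi2 chi1 chi2 B C D W (n m p N N' t v : nat) (S1 S2 S1' S2' : pred nat) :
  compat psi1 psi2 chi1 chi2 ->
  (0 < n)%N -> (0 < m)%N -> (0 < p)%N -> (n <= s1 <= n.+1)%N -> (m <= s2 <= m.+1)%N ->
  t = (s1.-1 + m)%N -> v = (s2.-1 + p)%N -> N = (s1.-1 + v)%N -> N' = N ->
  S1 =1 Iv s1 t -> S2 =1 Iv (s1.-1 + s2) N -> S1' =1 Iv s1 N -> S2' =1 Iv s2 v ->
  LT psi1 psi2 B C D W n t S1 N S2 = RT chi1 chi2 B C D W n m v S2' N' S1'.
Proof. move=> Hc h0 h1 h2 h3 h4 h5 h6 h7 E; rewrite E; exact: (term_eq B C D W Hc h0 h1 h2 h3 h4 h5 h6 h7). Qed.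

Lemma basis_eq psi1 psi2 chi1 chi2 B C D W : compat psi1 psi2 chi1 chi2 ->
  (0 < msize B)%N -> (0 < msize C)%N -> (0 < msize D)%N ->
  Ssum (gen psi1 B C) (fun U => Ssum (gen psi2 U D) (fun X => (X == W)%:R)) =
  Ssum (gen chi2 C D) (fun V => Ssum (gen chi1 B V) (fun X => (X == W)%:R)).
Proof.
move=> Hc n0 m0 p0; rewrite master_L master_R /=.
set n := msize B; set m := msize C; set p := msize D.
have L1 : LT psi1 psi2 B C D W n (n + m) (fun x => (n < x <= n + m)%N)
      (n + m + p) (fun x => (n + m < x <= n + m + p)%N) =
   RT chi1 chi2 B C D W n m (m + p) (fun x => (m < x <= m + p)%N)
      (n + (m + p)) (fun x => (n < x <= n + (m + p))%N).
  apply: (term_eq' (s1 := n.+1) (s2 := m.+1) (p := p) B C D W Hc) => //; try (move=> ?; rewrite /Iv /=; boolia); tolia.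
have L2 : LT psi1 psi2 B C D W n (n + m) (fun x => (n < x <= n + m)%N)
      (n + m + p - 1) (fun x => (n + m <= x <= n + m + p - 1)%N) =
   RT chi1 chi2 B C D W n m (m + p - 1) (fun x => (m <= x <= m + p - 1)%N)
      (n + (m + p - 1)) (fun x => (n < x <= n + (m + p - 1))%N).
  apply: (term_eq' (s1 := n.+1) (s2 := m) (p := p) B C D W Hc) => //; try (move=> ?; rewrite /Iv /=; boolia); tolia.
have L3 : LT psi1 psi2 B C D W n (n + m - 1) (fun x => (n <= x <= n + m - 1)%N)
      (n + m - 1 + p) (fun x => (n + m - 1 < x <= n + m - 1 + p)%N) =
   RT chi1 chi2 B C D W n m (m + p) (fun x => (m < x <= m + p)%N)
      (n + (m + p) - 1) (fun x => (n <= x <= n + (m + p) - 1)%N).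
  apply: (term_eq' (s1 := n) (s2 := m.+1) (p := p) B C D W Hc) => //; try (move=> ?; rewrite /Iv /=; boolia); tolia.
have L4 : LT psi1 psi2 B C D W n (n + m - 1) (fun x => (n <= x <= n + m - 1)%N)
      (n + m - 1 + p - 1) (fun x => (n + m - 1 <= x <= n + m - 1 + p - 1)%N) =
   RT chi1 chi2 B C D W n m (m + p - 1) (fun x => (m <= x <= m + p - 1)%N)
      (n + (m + p - 1) - 1) (fun x => (n <= x <= n + (m + p - 1) - 1)%N).
  apply: (term_eq' (s1 := n) (s2 := m) (p := p) B C D W Hc) => //; try (move=> ?; rewrite /Iv /=; boolia); tolia.
by rewrite L1 L2 L3 L4 addrACA.
Qed.


End Alg.

Set Implicit Arguments. Unset Strict Implicit. Unset Printing Implicit Defensive.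
Import GRing.Theory.
Local Open Scope ring_scope.

Section Alg3.
Variable K : fieldType.
Lemma Ssum_ext (x : alg K) G1 G2 : (forall U, G1 U = G2 U) -> Ssum x G1 = Ssum x G2.
Proof. by move=> H; apply: eq_bigr => t _; rewrite H. Qed.

Lemma Ssum_gen_lin (q : K) B D G :
  Ssum (gen (psip q) B D) G + Ssum (gen (psis q) B D) G + q * Ssum (gen (psid q) B D) G =
  Ssum (gen (psiall q) B D) G.
Proof.
rewrite /Ssum /gen !big_map mulr_sumr -!big_split; apply: eq_bigr => WS _ /=.
by rewrite /psiall !mulrDl mulrA.
Qed.

Definition dW (W : mperm) := fun X : mperm => (X == W)%:R : K.

Lemma liftL f g (x y z : alg K) W :
  coef (bilin f (bilin g x y) z) W =
  Ssum x (fun A => Ssum y (fun B => Ssum z (fun D => Ssum (g A B) (fun U => Ssum (f U D) (dW W))))).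
Proof.
rewrite coefSsum !Ssum_bilin; apply: Ssum_ext => A; apply: Ssum_ext => B.
exact: Ssum_exchange.
Qed.

Lemma liftR f g (x y z : alg K) W :
  coef (bilin f x (bilin g y z)) W =
  Ssum x (fun A => Ssum y (fun B => Ssum z (fun D => Ssum (g B D) (fun V => Ssum (f A V) (dW W))))).
Proof. by rewrite coefSsum Ssum_bilin; apply: Ssum_ext => A; rewrite Ssum_bilin. Qed.

Lemma liftL3 (q : K) f g1 g2 g3 (x y z : alg K) W :
  coef (bilin f (aadd (aadd (bilin g1 x y) (bilin g2 x y)) (ascale q (bilin g3 x y))) z) W =
  Ssum x (fun A => Ssum y (fun B => Ssum z (fun D =>
    Ssum (g1 A B) (fun U => Ssum (f U D) (dW W)) + Ssum (g2 A B) (fun U => Ssum (f U D) (dW W)) +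
    q * Ssum (g3 A B) (fun U => Ssum (f U D) (dW W))))).
Proof.
rewrite coefSsum Ssum_bilin /aadd !Ssum_cat Ssum_scale !Ssum_bilin.
rewrite -Ssum_mull -!Ssum_add; apply: Ssum_ext => A.
rewrite -Ssum_mull -!Ssum_add; apply: Ssum_ext => B.
rewrite [RHS]Ssum_add Ssum_add Ssum_mull.
by congr (_ + _ + _ * _); apply: Ssum_exchange.
Qed.

Lemma liftR3 (q : K) f g1 g2 g3 (x y z : alg K) W :
  coef (bilin f x (aadd (aadd (bilin g1 y z) (bilin g2 y z)) (ascale q (bilin g3 y z)))) W =
  Ssum x (fun A => Ssum y (fun B => Ssum z (fun D =>
    Ssum (g1 B D) (fun V => Ssum (f A V) (dW W)) + Ssum (g2 B D) (fun V => Ssum (f A V) (dW W)) +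
    q * Ssum (g3 B D) (fun V => Ssum (f A V) (dW W))))).
Proof.
rewrite coefSsum Ssum_bilin; apply: Ssum_ext => A.
rewrite /aadd !Ssum_cat Ssum_scale !Ssum_bilin -Ssum_mull -!Ssum_add; apply: Ssum_ext => B.
by rewrite -Ssum_mull -!Ssum_add.
Qed.

Lemma Ssum3_eq (x y z : alg K) F1 F2 : valid x -> valid y -> valid z ->
  (forall A B D, is_basis A -> is_basis B -> is_basis D -> F1 A B D = F2 A B D) ->
  Ssum x (fun A => Ssum y (fun B => Ssum z (fun D => F1 A B D))) =
  Ssum x (fun A => Ssum y (fun B => Ssum z (fun D => F2 A B D))).
Proof.
move=> vx vy vz H; apply: Ssum_eq_valid => // A hA; apply: Ssum_eq_valid => // B hB.
by apply: Ssum_eq_valid => // D hD; apply: H.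
Qed.

End Alg3.

Set Implicit Arguments. Unset Strict Implicit. Unset Printing Implicit Defensive.
Import GRing.Theory.
Local Open Scope ring_scope.

Theorem proposition3p3 (K : fieldType) (q : K) :
  q_tridendriform (fun x : alg K => valid x) (@aeq K) (@aadd K) (@ascale K) q
    (prec_q q) (dot_q q) (succ_q q).
Proof.
move=> a b c va vb vc.
have bp : forall B, is_basis B -> (0 < msize B)%N by move=> B /andP [].
split; [|split; [|split; [|split; [|split; [|split]]]]] => W.
- rewrite /prec_q /succ_q /dot_q liftL liftR3; apply: Ssum3_eq => // A B D hA hB hD.
  rewrite Ssum_prec (Ssum_ext _ (fun U => Ssum_prec q U D _)).
  rewrite Ssum_prec Ssum_succ Ssum_dot Ssum_gen_lin.
  rewrite (Ssum_ext _ (fun V => Ssum_prec q A V _)).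
  by apply: basis_eq; [exact: compat1 | exact: bp | exact: bp | exact: bp].
- rewrite /prec_q /succ_q liftL liftR; apply: Ssum3_eq => // A B D hA hB hD.
  rewrite Ssum_succ (Ssum_ext _ (fun U => Ssum_prec q U D _)).
  rewrite Ssum_prec (Ssum_ext _ (fun V => Ssum_succ q A V _)).
  by apply: basis_eq; [exact: compat2 | exact: bp | exact: bp | exact: bp].
- rewrite /prec_q /succ_q /dot_q liftL3 liftR; apply: Ssum3_eq => // A B D hA hB hD.
  rewrite Ssum_prec Ssum_succ Ssum_dot Ssum_gen_lin.
  rewrite (Ssum_ext _ (fun U => Ssum_succ q U D _)).
  rewrite Ssum_succ (Ssum_ext _ (fun V => Ssum_succ q A V _)).
  by apply: basis_eq; [exact: compat3 | exact: bp | exact: bp | exact: bp].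
- rewrite /dot_q liftL liftR; apply: Ssum3_eq => // A B D hA hB hD.
  rewrite Ssum_dot (Ssum_ext _ (fun U => Ssum_dot q U D _)).
  rewrite Ssum_dot (Ssum_ext _ (fun V => Ssum_dot q A V _)).
  by apply: basis_eq; [exact: compat4 | exact: bp | exact: bp | exact: bp].
- rewrite /dot_q /succ_q liftL liftR; apply: Ssum3_eq => // A B D hA hB hD.
  rewrite Ssum_succ (Ssum_ext _ (fun U => Ssum_dot q U D _)).
  rewrite Ssum_dot (Ssum_ext _ (fun V => Ssum_succ q A V _)).
  by apply: basis_eq; [exact: compat5 | exact: bp | exact: bp | exact: bp].
- rewrite /dot_q /succ_q /prec_q liftL liftR; apply: Ssum3_eq => // A B D hA hB hD.
  rewrite Ssum_prec (Ssum_ext _ (fun U => Ssum_dot q U D _)).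
  rewrite Ssum_succ (Ssum_ext _ (fun V => Ssum_dot q A V _)).
  by apply: basis_eq; [exact: compat6 | exact: bp | exact: bp | exact: bp].
- rewrite /dot_q /prec_q liftL liftR; apply: Ssum3_eq => // A B D hA hB hD.
  rewrite Ssum_dot (Ssum_ext _ (fun U => Ssum_prec q U D _)).
  rewrite Ssum_prec (Ssum_ext _ (fun V => Ssum_dot q A V _)).
  by apply: basis_eq; [exact: compat7 | exact: bp | exact: bp | exact: bp].
Qed.
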